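(* Let $G$ be a finite graph with maximum degree $\Delta$, with edges ordered $e_1,\ldots,e_m$, let $\gamma>1$ be real, $K=\lceil(2+\gamma)(\Delta-1)\rceil$, and $t$ a positive integer. Let $F\in\{1,\ldots,\lceil\gamma(\Delta-1)\rceil\}^t$ be an input for which, when the Procedure described in the context is run, some edge is still uncolored after step $t$, and let $R=(R_1,\ldots,R_t)$ be the record produced. Let $R^\circ$ be the word over $\{0,1\}$ obtained by concatenating, for $i=1,\ldots,t$, the word $0$ if $R_i$ is empty and the word $0\,1^{2k-2}$ if $R_i=(k,\ell)$. Then $R^\circ$ is a partial Dyck word with $t$ letters $0$ and $t-r$ letters $1$, where $r$ is the number of colored edges after step $t$. Moreover, all descents in $R^\circ$ have even length, and if every cycle of $G$ has length at least $2\ell+1$ for some integer $\ell\ge 1$, then all descents in $R^\circ$ have length at least $\max(4,2\ell)$.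
   Context: Procedure. A partial edge-coloring assigns to some edges a color in $\{1,\ldots,K\}$; initially all edges are uncolored. Fix, for every edge $e$ and every $k\ge 3$, an enumeration (e.g. lexicographic) of the cycles of length $2k$ of $G$ containing $e$. At step $i=1,2,\ldots,t$: if no edge is uncolored, stop. Otherwise let $e_j=uv$ be the uncolored edge of smallest index. Let $S'$ be the set of colors appearing on edges $xy\neq uv$ such that (1) $x=u$ or $x=v$, or (2) edges $ux$ and $vy$ exist and have the same color; let $S=\{1,\ldots,K\}\setminus S'$. Color $e_j$ with the $F_i$-th smallest element of $S$. If this creates a cycle colored with only two colors (it has length $2k\ge 6$), choose one such cycle $C$ by a fixed deterministic rule, write it as $e_{i_1},e_{i_2},\ldots,e_{i_{2k}},e_{i_1}$ (consecutive edges) with $e_{i_1}=e_j$ and $i_2<i_{2k}$, uncolor all edges of $C$ except $e_{i_2}$ and $e_{i_3}$, and set $R_i=(k,\ell)$ where $\ell$ is the index of $C$ in the fixed enumeration of cycles of length $2k$ containing $e_j$. Otherwise $R_i$ is empty. A partial Dyck word is a word over $\{0,1\}$ in which every prefix contains at least as many $0$'s as $1$'s. A descent is a maximal block of consecutive $1$'s. *)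

(* Defs.v *)
From mathcomp Require Import all_boot all_order all_algebra.
Set Implicit Arguments. Unset Strict Implicit. Unset Printing Implicit Defensive.
Import Order.TTheory GRing.Theory Num.Theory.

(* Graph: vertices T, edges e_0..e_{m-1} (paper: e_1..e_m), edge i has endpoints ends i. *)
Definition joins (T : finType) (m : nat) (ends : 'I_m -> T * T) (i : 'I_m) (a b : T) : bool :=
  (ends i == (a, b)) || (ends i == (b, a)).

Definition incident (T : finType) (m : nat) (ends : 'I_m -> T * T) (i : 'I_m) (v : T) : bool :=
  ((ends i).1 == v) || ((ends i).2 == v).

Definition simple_graph (T : finType) (m : nat) (ends : 'I_m -> T * T) : Prop :=
  (forall i, (ends i).1 != (ends i).2) /\
  (forall i i', joins ends i (ends i').1 (ends i').2 -> i = i').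

Definition maxdeg (T : finType) (m : nat) (ends : 'I_m -> T * T) : nat :=
  \max_(v : T) #|[set i | incident ends i v]|.

Definition is_cycle (T : finType) (m : nat) (ends : 'I_m -> T * T) (cs : seq 'I_m) : Prop :=
  3 <= size cs /\ uniq cs /\
  exists vs : seq T, size vs = size cs /\ uniq vs /\
    forall (d : 'I_m) (dv : T) (i : nat), i < size cs ->
      joins ends (nth d cs i) (nth dv vs i) (nth dv vs (i.+1 %% size cs)).

Definition normal_cycle (T : finType) (m : nat) (ends : 'I_m -> T * T) (j : 'I_m)
  (cs : seq 'I_m) : Prop :=
  is_cycle ends cs /\ head j cs = j /\ (nth j cs 1 < nth j cs (size cs).-1)%N.

(* colorings: c i = 0 means uncolored, colors are 1..K *)
Definition bicycle (T : finType) (m : nat) (ends : 'I_m -> T * T) (c : 'I_m -> nat)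
  (j : 'I_m) (cs : seq 'I_m) : Prop :=
  normal_cycle ends j cs /\ all (fun i => c i != 0) cs /\ size (undup (map c cs)) <= 2.

Definition rule_spec (T : finType) (m : nat) (ends : 'I_m -> T * T)
  (rule : ('I_m -> nat) -> 'I_m -> option (seq 'I_m)) : Prop :=
  forall c j, match rule c j with
              | Some cs => bicycle ends c j cs
              | None => forall cs, ~ bicycle ends c j cs
              end.

Definition enum_spec (T : finType) (m : nat) (ends : 'I_m -> T * T)
  (enumc : 'I_m -> nat -> seq (seq 'I_m)) : Prop :=
  forall j k, uniq (enumc j k) /\
    forall cs, cs \in enumc j k <-> (normal_cycle ends j cs /\ size cs = (2 * k)%N).

Definition forbidden (T : finType) (m : nat) (ends : 'I_m -> T * T) (c : 'I_m -> nat)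
  (j : 'I_m) (a : nat) : bool :=
  [exists i : 'I_m, [&& i != j, a != 0, c i == a &
    [exists x : T, exists y : T, joins ends i x y &&
      [|| x == (ends j).1, x == (ends j).2 |
       [exists p : 'I_m, exists q : 'I_m,
          [&& joins ends p (ends j).1 x, joins ends q (ends j).2 y,
              c p != 0 & c p == c q]]]]]].

Definition palette (T : finType) (m : nat) (ends : 'I_m -> T * T) (K : nat)
  (c : 'I_m -> nat) (j : 'I_m) : seq nat :=
  [seq a <- iota 1 K | ~~ forbidden ends c j a].

Definition step (T : finType) (m : nat) (ends : 'I_m -> T * T)
  (rule : ('I_m -> nat) -> 'I_m -> option (seq 'I_m))
  (enumc : 'I_m -> nat -> seq (seq 'I_m)) (K : nat)
  (c : 'I_m -> nat) (f : nat) : ('I_m -> nat) * option (nat * nat) :=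
  match [pick j | (c j == 0) && [forall i : 'I_m, (i < j)%N ==> (c i != 0)]] with
  | None => (c, None)
  | Some j =>
      let a := nth 0 (palette ends K c j) f.-1 in
      let c1 := fun i => if i == j then a else c i in
      match rule c1 j with
      | None => (c1, None)
      | Some cs =>
          let k := (size cs)./2 in
          ((fun i => if [&& i \in cs, i != nth j cs 1 & i != nth j cs 2] then 0 else c1 i),
           Some (k, (index cs (enumc j k)).+1))
      end
  end.

Fixpoint run_from (T : finType) (m : nat) (ends : 'I_m -> T * T)
  (rule : ('I_m -> nat) -> 'I_m -> option (seq 'I_m))
  (enumc : 'I_m -> nat -> seq (seq 'I_m)) (K : nat)
  (c : 'I_m -> nat) (F : seq nat) : ('I_m -> nat) * seq (option (nat * nat)) :=
  match F with
  | [::] => (c, [::])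
  | f :: F' =>
      let sr := step ends rule enumc K c f in
      let rest := run_from ends rule enumc K sr.1 F' in
      (rest.1, sr.2 :: rest.2)
  end.

Definition procedure (T : finType) (m : nat) (ends : 'I_m -> T * T)
  (rule : ('I_m -> nat) -> 'I_m -> option (seq 'I_m))
  (enumc : 'I_m -> nat -> seq (seq 'I_m)) (K : nat) (F : seq nat) :=
  run_from ends rule enumc K (fun _ => 0) F.

Definition ceiln (R : archiRealFieldType) (x : R) : nat := absz (Num.ceil x).

Definition Kcol (R : archiRealFieldType) (gamma : R) (D : nat) : nat :=
  ceiln ((2%:R + gamma) * (D.-1)%:R).
Definition Fbound (R : archiRealFieldType) (gamma : R) (D : nat) : nat :=
  ceiln (gamma * (D.-1)%:R).

Definition Rcirc (R : seq (option (nat * nat))) : seq nat :=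
  flatten [seq if r is Some (k, _) then 0 :: nseq (2 * k - 2) 1 else [:: 0] | r <- R].

Definition partial_dyck (w : seq nat) : Prop :=
  all (fun x => (x == 0) || (x == 1)) w /\
  forall n, count_mem 1 (take n w) <= count_mem 0 (take n w).

(* positions a..b-1 form a descent (maximal block of 1's); its length is b - a *)
Definition descent (w : seq nat) (a b : nat) : bool :=
  [&& a < b, b <= size w, all (fun i => nth 0 w i == 1) (iota a (b - a)),
      (a == 0) || (nth 0 w a.-1 != 1) &
      (b == size w) || (nth 0 w b != 1)].

(* Main.v *)
Require Import Defs.
From mathcomp Require Import all_boot all_order all_algebra.
Import Order.TTheory GRing.Theory Num.Theory.
From mathcomp Require Import zify.

Definition nb (r : option (nat * nat)) : nat := if r is Some (k, _) then (2 * k - 2)%N else 0%N.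
Definition W (ns : seq nat) : seq nat := flatten [seq 0%N :: nseq n 1%N | n <- ns].

Lemma Rcirc_cons r R : Rcirc (r :: R) = 0%N :: nseq (nb r) 1%N ++ Rcirc R.
Proof. by case: r => [[k l]|]. Qed.

Lemma Rcirc_W R : Rcirc R = W (map nb R).
Proof. by elim: R => [|r R IH] //=; rewrite Rcirc_cons IH. Qed.

Lemma W_cons n ns : W (n :: ns) = 0%N :: nseq n 1%N ++ W ns.
Proof. by []. Qed.

Lemma W_head ns : nth 0%N (W ns) 0 != 1%N.
Proof. by case: ns. Qed.

Lemma size_W_cons n ns : size (W (n :: ns)) = (n.+1 + size (W ns))%N.
Proof. by rewrite W_cons /= size_cat size_nseq. Qed.

Lemma nth_W_cons n ns i : nth 0%N (W (n :: ns)) i =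
  if i == 0%N then 0%N else if (i <= n)%N then 1%N else nth 0%N (W ns) (i - n.+1).
Proof.
rewrite W_cons; case: i => [|i] //=; rewrite nth_cat size_nseq nth_nseq.
by case: ltnP => H; rewrite ?subSS.
Qed.

Lemma nthW1 n ns i : (0 < i <= n)%N -> nth 0%N (W (n :: ns)) i = 1%N.
Proof. by case/andP=> H1 H2; rewrite nth_W_cons H2; case: i H1 H2. Qed.
Lemma nthW0 n ns : nth 0%N (W (n :: ns)) 0 = 0%N.
Proof. by []. Qed.
Lemma nthW2 n ns i : (n < i)%N -> nth 0%N (W (n :: ns)) i = nth 0%N (W ns) (i - n.+1).
Proof. by move=> H; rewrite nth_W_cons ifN ?ifN // -?ltnNge //; case: i H. Qed.

Lemma descent_W ns a b : descent (W ns) a b -> (b - a) \in ns.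
Proof.
elim: ns a b => [|n ns IH] a b.
  by rewrite /descent /= => /and5P [H1 H2 _ _ _]; lia.
case/and5P => Hab Hb /allP Hall HA HB.
have Hall' i : (a <= i < b)%N -> nth 0%N (W (n :: ns)) i = 1%N.
  by move=> Hi; apply/eqP; apply: Hall; rewrite mem_iota; lia.
clear Hall.
have Hw := W_head ns.
rewrite size_W_cons in Hb HB.
have Ha0 : a != 0%N.
  apply/eqP=> E; have H := Hall' a; rewrite E nthW0 in H.
  suff : 0%N = 1%N by []. by apply: H; lia.
rewrite (negbTE Ha0) /= in HA.
case: (leqP a n) => Han.
  have Ha1 : a = 1%N.
    case: (a =P 1%N) => // Hne.
    by move: HA; rewrite nthW1 //; lia.
  subst a; clear HA Ha0.
  case: (ltnP b n.+1) => Hbn.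
    case/orP: HB => [/eqP|]; first by lia.
    by rewrite nthW1 //; lia.
  case: (ltnP n.+1 b) => Hbn'.
    by move: (Hall' n.+1); rewrite nthW2 // subnn => H; move: Hw; rewrite H; lia.
  have -> : b = n.+1 by lia.
  by rewrite subn1 /= mem_head.
have Hgt : (n.+1 < a)%N.
  case: (a =P n.+1) => [Ea|Ne]; last by lia.
  by move: (Hall' a); rewrite nthW2 Ea ?subnn // => H; move: Hw; rewrite H; lia.
have : descent (W ns) (a - n.+1) (b - n.+1).
  apply/and5P; split.
  - by lia.
  - by lia.
  - apply/allP => i; rewrite mem_iota => Hi.
    have := Hall' (i + n.+1); rewrite nthW2; last by lia.
    by rewrite addnK => ->; lia.
  - apply/orP; right; move: HA; rewrite nthW2; last by lia.
    by rewrite (_ : (a.-1 - n.+1 = (a - n.+1).-1)%N) //; lia.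
  - case/orP: HB => [/eqP Eb|]; first by apply/orP; left; apply/eqP; lia.
    by rewrite nthW2 ?orbT //; lia.
move/IH; rewrite (_ : (b - n.+1 - (a - n.+1) = b - a)%N); last by lia.
by rewrite inE => ->; rewrite orbT.
Qed.

Set Implicit Arguments. Unset Strict Implicit. Unset Printing Implicit Defensive.


Section G.
Variables (T : finType) (m : nat) (ends : 'I_m -> T * T).
Hypothesis Hs : simple_graph ends.

Lemma joinsP i a b : reflect (ends i = (a, b) \/ ends i = (b, a)) (joins ends i a b).
Proof. by rewrite /joins; apply: (iffP orP) => -[/eqP|/eqP] H; rewrite ?H ?eqxx; auto. Qed.

Lemma joins_sym i a b : joins ends i a b = joins ends i b a.
Proof. by rewrite /joins orbC. Qed.

Lemma joins_inc1 i a b : joins ends i a b -> incident ends i a.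
Proof. by rewrite /incident; case/joinsP => ->; rewrite /= eqxx ?orbT. Qed.

Lemma joins_inc2 i a b : joins ends i a b -> incident ends i b.
Proof. by rewrite joins_sym; apply: joins_inc1. Qed.

Lemma inc_joins i x : incident ends i x -> exists y, joins ends i x y.
Proof.
rewrite /incident /joins; case: (ends i) => a b /= /orP [/eqP ->|/eqP ->].
  by exists b; rewrite eqxx.
by exists a; rewrite eqxx orbT.
Qed.

Lemma joins_uniq i i' x y : joins ends i x y -> joins ends i' x y -> i = i'.
Proof.
move=> H H'; apply: (Hs.2 i i').
by case/joinsP: H' => ->; rewrite //= joins_sym.
Qed.

Lemma joins_other i v y y' : joins ends i v y -> joins ends i v y' -> y = y'.
Proof. by move=> /joinsP H /joinsP H'; case: H H' => -> [] [] *; subst. Qed.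

Lemma inc_both i u v : incident ends i u -> incident ends i v -> u != v -> joins ends i u v.
Proof.
rewrite /incident /joins; case: (ends i) => a b /=.
by case/orP=> /eqP <-; case/orP=> /eqP <-; rewrite ?eqxx //= ?orbT.
Qed.

Definition propc (c : 'I_m -> nat) := forall i i' v, i != i' -> incident ends i v ->
  incident ends i' v -> c i != 0%N -> c i != c i'.

Definition ncol (c : 'I_m -> nat) := #|[set i | c i != 0%N]|.


Definition Wit (c : 'I_m -> nat) (j : 'I_m) (a : nat) (q : 'I_m) : bool :=
  [exists i, exists x, exists y, exists p, [&& c i == a, joins ends i x y,
     joins ends p (ends j).1 x, joins ends q (ends j).2 y & (c p != 0%N) && (c p == c q)]].

Lemma Wit_uniq c j a a' q : propc c -> Wit c j a q -> Wit c j a' q -> a = a'.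
Proof.
move=> Hp /existsP [i /existsP [x /existsP [y /existsP [p /and5P [/eqP Hi Hixy Hp1 Hq1 /andP [Hp0 /eqP Hpq]]]]]].
move=> /existsP [i' /existsP [x' /existsP [y' /existsP [p' /and5P [/eqP Hi' Hixy' Hp1' Hq1' /andP [Hp0' /eqP Hpq']]]]]].
have Ey : y = y' := joins_other Hq1 Hq1'.
have Ep : p = p'.
  apply/eqP; apply/negP => /negP Hne.
  move: (Hp p p' _ Hne (joins_inc1 Hp1) (joins_inc1 Hp1') Hp0).
  by rewrite Hpq Hpq' eqxx.
subst y' p'; have Ex := joins_other Hp1 Hp1'; subst x'.
by rewrite -Hi -Hi'; congr c; exact: joins_uniq Hixy Hixy'.
Qed.

Lemma inc_card j v : #|[set i | (i != j) && incident ends i v]| <= (maxdeg ends).-1 ?= iff true -> True.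
Proof. by []. Qed.

Lemma card_U j v : incident ends j v -> (#|[set i | (i != j) && incident ends i v]| <= (maxdeg ends).-1)%N.
Proof.
move=> Hj.
have H1 : (#|[set i | incident ends i v]| <= maxdeg ends)%N.
  exact: (leq_bigmax (F := fun v => #|[set i | incident ends i v]|) v).
have E : [set i | (i != j) && incident ends i v] = [set i | incident ends i v] :\ j.
  by apply/setP => i; rewrite !inE.
move: H1; rewrite (cardsD1 j) E inE Hj /=; lia.
Qed.

Lemma forbidden_count (c : 'I_m -> nat) j s : propc c -> c j = 0%N -> uniq s ->
  (count (forbidden ends c j) s <= 2 * (maxdeg ends).-1)%N.
Proof.
move=> Hp Hcj Hus.
have Huv : (ends j).1 != (ends j).2 := Hs.1 j.
pose U := [set i | (i != j) && incident ends i (ends j).1].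
pose V := [set i | (i != j) && incident ends i (ends j).2].
pose Q a e := (c e == a) || Wit c j a e.
pose g a := if [pick e in U | c e == a] is Some e then e
            else if [pick e in V | Q a e] is Some e then e else j.
have HUV e : e \in U -> e \in V -> False.
  rewrite !inE => /andP [Hej Hu] /andP [_ Hv]; move/negP: Hej; apply; apply/eqP.
  by apply: Hs.2; exact: inc_both Hu Hv Huv.
have Hspec a : forbidden ends c j a -> (g a \in U /\ c (g a) = a) \/
    (g a \in V /\ Q a (g a) /\ forall e, e \in U -> c e != a).
  move=> Hf; rewrite /g; case: pickP => [e /andP [HeU /eqP Hce]|HnU]; first by left.
  have HnU' e : e \in U -> c e != a.
    by move=> He; move: (HnU e); rewrite He /= => ->.
  case: pickP => [e /andP [HeV HQ]|HnV]; first by right.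
  exfalso; move: Hf; rewrite /forbidden.
  move=> /existsP [i /and4P [Hij Ha0 /eqP Hci /existsP [x /existsP [y /andP [Hjxy Hor]]]]].
  case/or3P: Hor => [/eqP Ex|/eqP Ex|/existsP [p /existsP [q /and4P [Hp1 Hq1 Hcp0 /eqP Hcpq]]]].
  - have HiU : i \in U by rewrite inE Hij -Ex; exact: joins_inc1 Hjxy.
    by move: (HnU' i HiU); rewrite Hci eqxx.
  - have HiV : i \in V by rewrite inE Hij -Ex; exact: joins_inc1 Hjxy.
    by move: (HnV i); rewrite HiV /Q Hci eqxx.
  - have HqV : q \in V.
      rewrite inE (joins_inc1 Hq1) andbT; apply/eqP => Eq.
      by move: Hcp0; rewrite Hcpq Eq Hcj.
    suff HQq : Q a q by move: (HnV q); rewrite HqV HQq.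
    apply/orP; right.
    apply/existsP; exists i; apply/existsP; exists x; apply/existsP; exists y.
    by apply/existsP; exists p; rewrite Hci eqxx Hjxy Hp1 Hq1 Hcp0 Hcpq eqxx.
have Hwu a q : Wit c j a q -> exists2 p, p \in U & c p = c q.
  move=> /existsP [i /existsP [x /existsP [y /existsP [p /and5P [_ _ Hp1 _ /andP [Hp0 /eqP Hpq]]]]]].
  exists p => //; rewrite inE (joins_inc1 Hp1) andbT; apply/eqP => E.
  by move: Hp0; rewrite E Hcj.
have Hinj : {in forbidden ends c j &, injective g}.
  move=> a a' Ha Ha' Eg.
  case: (Hspec a Ha) (Hspec a' Ha') => [[HU Hc]|[HV [HQ HnU]]] [[HU' Hc']|[HV' [HQ' HnU']]].
  - by rewrite -Hc -Hc' Eg.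
  - by exfalso; apply: (HUV (g a)) => //; rewrite Eg.
  - by exfalso; apply: (HUV (g a)) => //; rewrite Eg.
  - rewrite -Eg in HQ'; move: HQ HQ'; rewrite /Q.
    case/orP => [/eqP H1|H1]; case/orP => [/eqP H2|H2].
    + by rewrite -H1 -H2.
    + case: (Hwu _ _ H2) => p Hpp Hpc.
      by move: (HnU p Hpp); rewrite Hpc H1 eqxx.
    + case: (Hwu _ _ H1) => p Hpp Hpc.
      by move: (HnU' p Hpp); rewrite Hpc H2 eqxx.
    + exact: Wit_uniq Hp H1 H2.
have Hsub : {subset map g (filter (forbidden ends c j) s) <= enum (U :|: V)}.
  move=> e /mapP [a]; rewrite mem_filter => /andP [Ha _] ->.
  by rewrite mem_enum inE; case: (Hspec a Ha) => [[-> _]|[-> _]]; rewrite ?orbT.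
have Huq : uniq (map g (filter (forbidden ends c j) s)).
  rewrite map_inj_in_uniq ?filter_uniq //.
  by move=> a a'; rewrite !mem_filter => /andP [Ha _] /andP [Ha' _]; exact: Hinj.
have := uniq_leq_size Huq Hsub; rewrite size_map size_filter -cardE cardsU.
have := card_U (j := j) (v := (ends j).1); have := card_U (j := j) (v := (ends j).2).
rewrite /incident !eqxx ?orbT /= => H2 H1; move: (H1 isT) (H2 isT) => H1' H2'.
rewrite -/U -/V in H1' H2'; lia.
Qed.


Lemma two_val (s : seq nat) x y z : x \in s -> y \in s -> z \in s ->
  (size (undup s) <= 2)%N -> x != y -> y != z -> x = z.
Proof.
move=> Hx Hy Hz Hs2 Hxy Hyz; apply/eqP; apply/negP => /negP Hxz.
have Hu : uniq [:: x; y; z] by rewrite /= !inE negb_or Hxy Hxz Hyz.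
have := uniq_leq_size Hu (s2 := undup s).
have Hsub : {subset [:: x; y; z] <= undup s}.
  by move=> w; rewrite !inE mem_undup => /or3P [] /eqP ->.
by move/(_ Hsub) => /= H; move: Hs2; rewrite leqNgt H.
Qed.

Lemma cyc_adj (c : 'I_m -> nat) d cs i : propc c -> is_cycle ends cs -> all (fun i => c i != 0%N) cs ->
  (i < size cs)%N -> c (nth d cs i) != c (nth d cs (i.+1 %% size cs)).
Proof.
move=> Hp [Hn [Hu [vs [Hvs [_ Hj]]]]] Hall Hi.
have Hi' : (i.+1 %% size cs < size cs)%N by rewrite ltn_pmod //; lia.
have Hne : nth d cs i != nth d cs (i.+1 %% size cs).
  rewrite nth_uniq //; case: (ltnP i.+1 (size cs)) => H.
    by rewrite modn_small //; lia.
  by rewrite (_ : i.+1 = size cs) ?modnn; lia.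
pose dv := (ends d).1.
apply: (Hp _ _ (nth dv vs (i.+1 %% size cs)) Hne).
- exact: joins_inc2 (Hj d dv i Hi).
- exact: joins_inc1 (Hj d dv _ Hi').
- exact: (allP Hall) _ (mem_nth d Hi).
Qed.

Lemma cyc_alt (c : 'I_m -> nat) d cs : propc c -> is_cycle ends cs -> all (fun i => c i != 0%N) cs ->
  (size (undup (map c cs)) <= 2)%N ->
  forall i, (i < size cs)%N -> (c (nth d cs i) == c (nth d cs 0)) = ~~ odd i.
Proof.
move=> Hp Hc Hall H2; elim=> [|i IH] Hi; first by rewrite eqxx.
have Hadj := cyc_adj d Hp Hc Hall (ltnW Hi).
rewrite modn_small // in Hadj.
have Hm k : (k < size cs)%N -> c (nth d cs k) \in map c cs by move=> Hk; apply: map_f; apply: mem_nth.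
move: (IH (ltnW Hi)); rewrite /= negbK.
move=> EE; rewrite -[odd i]negbK -EE; case: eqP => [E|Ne].
  by rewrite -E Hadj.
suff -> : c (nth d cs i) = c (nth d cs 0) by rewrite eqxx.
apply: (two_val (Hm _ (ltnW Hi)) (Hm _ Hi) (Hm 0%N _) H2) => //.
- by case: Hc => H3 _; lia.
- by apply/eqP.
Qed.

Lemma cyc_even (c : 'I_m -> nat) (d : 'I_m) cs : propc c -> is_cycle ends cs -> all (fun i => c i != 0%N) cs ->
  (size (undup (map c cs)) <= 2)%N -> ~~ odd (size cs).
Proof.
move=> Hp Hc Hall H2.
have H3 : (3 <= size cs)%N by case: Hc.
have Hl : ((size cs).-1 < size cs)%N by lia.
have := cyc_adj d Hp Hc Hall Hl.
rewrite (_ : ((size cs).-1).+1 = size cs); last by lia.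
rewrite modnn => H; move: (cyc_alt d Hp Hc Hall H2 Hl); rewrite (negbTE H) => /esym/negbFE.
by case: (size cs) H3 => [|n] //= _ ->.
Qed.


Lemma Kcol_eq (R : archiRealFieldType) (g : R) D : (1 < g)%R -> Kcol g D = (Fbound g D + 2 * D.-1)%N.
Proof.
move=> Hg; rewrite /Kcol /Fbound /ceiln.
have -> : ((2%:R + g) * (D.-1)%:R = g * (D.-1)%:R + ((2 * D.-1)%N%:Z)%:~R :> R)%R.
  by rewrite -pmulrn mulrDl natrM mulrC addrC.
rewrite ceilDrz ?intr_int // intrKceil.
have h0 : (0 <= Num.ceil (g * (D.-1)%:R))%R.
  rewrite ceil_ge0; apply: (@lt_le_trans _ _ 0%R); first by rewrite oppr_lt0.
  by apply: mulr_ge0 => //; apply: le_trans (ltW Hg).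
by case: (Num.ceil _) h0 => // n _; rewrite -PoszD.
Qed.

Lemma palette_ok (R : archiRealFieldType) (g : R) c j f : (1 < g)%R -> propc c -> c j = 0%N ->
  (1 <= f <= Fbound g (maxdeg ends))%N ->
  (nth 0%N (palette ends (Kcol g (maxdeg ends)) c j) f.-1 != 0%N) &&
  ~~ forbidden ends c j (nth 0%N (palette ends (Kcol g (maxdeg ends)) c j) f.-1).
Proof.
move=> Hg Hp Hcj Hf.
set K := Kcol g (maxdeg ends).
have Hcnt := forbidden_count Hp Hcj (iota_uniq 1 K).
have E : size (palette ends K c j) = (K - count (forbidden ends c j) (iota 1 K))%N.
  rewrite /palette size_filter.
  have Hc := count_predC (forbidden ends c j) (iota 1 K).
  have Hsz := size_iota 1 K.
  change (count (predC (forbidden ends c j)) (iota 1 K) = K - count (forbidden ends c j) (iota 1 K))%N.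
  lia.
have HK : K = (Fbound g (maxdeg ends) + 2 * (maxdeg ends).-1)%N by exact: Kcol_eq.
have Hlt : (f.-1 < size (palette ends K c j))%N by rewrite E; lia.
have := mem_nth 0%N Hlt; rewrite {2}/palette mem_filter mem_iota => /andP [Hnf Hr].
rewrite Hnf andbT; apply/eqP => E0; rewrite E0 in Hr; lia.
Qed.

Lemma not_forb_ne c j a i w : ~~ forbidden ends c j a -> a != 0%N -> i != j ->
  incident ends j w -> incident ends i w -> c i != a.
Proof.
move=> Hnf Ha Hij Hjw Hiw; apply/negP => /eqP Hci; move/negP: Hnf; apply.
apply/existsP; exists i; rewrite Hij Ha Hci eqxx /=.
case: (inc_joins Hiw) => y Hy.
apply/existsP; exists w; apply/existsP; exists y; rewrite Hy /=.
by rewrite /incident in Hjw; case/orP: Hjw => /eqP ->; rewrite eqxx ?orbT.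
Qed.

Definition upd (c : 'I_m -> nat) j a := fun i => if i == j then a else c i.

Lemma proper_upd c j a : propc c -> ~~ forbidden ends c j a -> a != 0%N -> propc (upd c j a).
Proof.
move=> Hp Hnf Ha i i' w Hne Hi Hi'; rewrite /upd.
have [Eij|Nij] := eqVneq i j; have [Ei'j|Ni'j] := eqVneq i' j.
- by subst; rewrite eqxx in Hne.
- subst i => _; rewrite eq_sym; exact: not_forb_ne Hnf Ha Ni'j Hi Hi'.
- subst i' => _; exact: not_forb_ne Hnf Ha Nij Hi' Hi.
- exact: (Hp i i' w Hne Hi Hi').
Qed.

Lemma ncol_upd c j a : c j = 0%N -> a != 0%N -> ncol (upd c j a) = (ncol c).+1.
Proof.
move=> Hcj Ha; rewrite /ncol.
have -> : [set i | upd c j a i != 0%N] = j |: [set i | c i != 0%N].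
  by apply/setP => i; rewrite !inE /upd; case: (eqVneq i j) => [->|] //=; rewrite Ha.
by rewrite cardsU1 inE Hcj.
Qed.


Definition unc (c1 : 'I_m -> nat) (cs : seq 'I_m) (j : 'I_m) :=
  fun i => if [&& i \in cs, i != nth j cs 1 & i != nth j cs 2] then 0%N else c1 i.

Lemma proper_unc c1 cs j : propc c1 -> propc (unc c1 cs j).
Proof.
move=> Hp i i' w Hne Hi Hi'; rewrite /unc; case: ifP => // _ H0.
by case: ifP => _; [ | exact: (Hp i i' w Hne Hi Hi' H0)].
Qed.

Lemma ncol_unc c1 cs j : uniq cs -> (3 <= size cs)%N -> all (fun i => c1 i != 0%N) cs ->
  (ncol (unc c1 cs j) + (size cs - 2) = ncol c1)%N.
Proof.
move=> Hu H3 Hall; rewrite /ncol.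
set e1 := nth j cs 1; set e2 := nth j cs 2.
have He1 : e1 \in cs by apply: mem_nth; lia.
have He2 : e2 \in cs by apply: mem_nth; lia.
have -> : [set i | unc c1 cs j i != 0%N] =
    [set i | c1 i != 0%N] :\: ([set i in cs] :\: [set e1; e2]).
  apply/setP => i; rewrite !inE /unc -/e1 -/e2.
  by case Hin: (i \in cs); case: (i =P e1); case: (i =P e2).
have Hs1 : [set e1; e2] \subset [set i in cs].
  by apply/subsetP => i; rewrite !inE => /orP [] /eqP ->.
have Hs2 : [set i in cs] :\: [set e1; e2] \subset [set i | c1 i != 0%N].
  by apply/subsetP => i; rewrite !inE => /andP [_ Hi]; exact: (allP Hall).
have Hne : e1 != e2 by rewrite /e1 /e2 nth_uniq //; lia.
have Hc : #|[set i in cs] :\: [set e1; e2]| = (size cs - 2)%N.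
  by rewrite cardsDS // cards2 Hne cardsE (card_uniqP Hu).
have := subset_leq_card Hs2.
by rewrite Hc cardsDS // Hc; lia.
Qed.

Lemma no_4cycle c j a cs : propc c -> c j = 0%N -> a != 0%N -> ~~ forbidden ends c j a ->
  bicycle ends (upd c j a) j cs -> size cs != 4.
Proof.
move=> Hp Hcj Ha Hnf Hb; apply/negP => /eqP H4.
have Hp1 := proper_upd Hp Hnf Ha.
case: Hb => [[Hcyc [Hhead _]] [Hall H2]].
have Halt := cyc_alt j Hp1 Hcyc Hall H2.
case: (Hcyc) => _ [Hu [vs [Hvs [_ Hj]]]].
clear Hcyc; move: Hhead Hall H2 Halt Hu Hj Hvs; rewrite H4.
case: cs H4 => [|x [|e1 [|e2 [|e3 [|]]]]] //= _ -> {x}.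
case: vs => [|v0 [|v1 [|v2 [|v3 [|]]]]] //= Hall H2 Halt Hu Hj _.
have J0 := Hj j v0 0%N isT; have J1 := Hj j v0 1%N isT.
have J2 := Hj j v0 2%N isT; have J3 := Hj j v0 3%N isT; simpl in J0, J1, J2, J3.
move: Hu; rewrite !inE !negb_or => /and4P [/and3P [Nj1 Nj2 Nj3] /andP [N12 N13] N23 _].
have A1 := Halt 1%N isT; have A2 := Halt 2%N isT; have A3 := Halt 3%N isT.
simpl in A1, A2, A3.
rewrite /upd eqxx !(eq_sym _ j) (negbTE Nj1) (negbTE Nj2) (negbTE Nj3) in A1 A2 A3 Hall.
move: Hall => /and4P [_ Hc1 _ _].
have E13 : c e1 = c e3.
  have Hm x : x \in [:: a; c e1; c e2; c e3] -> x \in map (upd c j a) [:: j; e1; e2; e3].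
    by rewrite /= /upd eqxx !(eq_sym _ j) (negbTE Nj1) (negbTE Nj2) (negbTE Nj3).
  apply: (two_val (y := a) (Hm _ _) (Hm _ _) (Hm _ _) H2); rewrite ?inE ?eqxx ?orbT //.
    by rewrite A1.
  by rewrite eq_sym A3.
move/negP: Hnf; apply.
apply/existsP; exists e2; rewrite eq_sym Nj2 Ha A2 /=.
case/joinsP: J0 => E.
- apply/existsP; exists v3; apply/existsP; exists v2; rewrite joins_sym J2 /= E /=.
  apply/orP; right; apply/orP; right.
  apply/existsP; exists e3; apply/existsP; exists e1.
  by rewrite joins_sym J3 J1 E13 eqxx -E13 Hc1.
- apply/existsP; exists v2; apply/existsP; exists v3; rewrite J2 /= E /=.
  apply/orP; right; apply/orP; right.
  apply/existsP; exists e1; apply/existsP; exists e3.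
  by rewrite J1 joins_sym J3 E13 eqxx -E13 Hc1.
Qed.

End G.


Section M.
Variables (T : finType) (m : nat) (ends : 'I_m -> T * T).
Hypothesis Hs : simple_graph ends.
Variables (rule : ('I_m -> nat) -> 'I_m -> option (seq 'I_m)) (enumc : 'I_m -> nat -> seq (seq 'I_m)).
Hypothesis Hrule : rule_spec ends rule.
Variables (R : archiRealFieldType) (g : R).
Hypothesis Hg : (1 < g)%R.

Notation K := (Kcol g (maxdeg ends)).
Notation Fb := (Fbound g (maxdeg ends)).

Lemma step_ok c f : propc ends c -> (exists i, c i = 0%N) -> (1 <= f <= Fb)%N ->
  [/\ propc ends (step ends rule enumc K c f).1,
      (nb (step ends rule enumc K c f).2 + ncol (step ends rule enumc K c f).1 = (ncol c).+1)%N &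
      forall k l, (step ends rule enumc K c f).2 = Some (k, l) ->
         (3 <= k)%N /\ exists cs, is_cycle ends cs /\ size cs = (2 * k)%N].
Proof.
move=> Hp [i0 Hi0] Hf.
rewrite /step.
case: pickP => [j /andP [/eqP Hcj _]|Hn]; last first.
  exfalso; have Hi0' : c i0 == 0%N by apply/eqP.
  case: (arg_minnP (P := fun i => c i == 0%N) (fun i : 'I_m => val i) Hi0') => j Hj Hmin.
  move: (Hn j); rewrite Hj /= => /negbT/negP; apply.
  apply/forallP => i; apply/implyP => Hij; apply/negP => /Hmin.
  by rewrite leqNgt Hij.
have /andP [Ha Hnf] := palette_ok Hs Hg Hp Hcj Hf.
set a := nth 0%N _ _ in Ha Hnf *.
have Hp1 := proper_upd Hp Hnf Ha.
case Hr: (rule _ j) => [cs|] /=.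
- have Hb := Hrule (fun i => if i == j then a else c i) j; rewrite Hr in Hb.
  have H4 := no_4cycle Hp Hcj Ha Hnf Hb.
  case: Hb => [[Hcyc [Hhead Hord]] [Hall H2]].
  have Heven := cyc_even j Hp1 Hcyc Hall H2.
  have H3 : (3 <= size cs)%N by case: Hcyc.
  have Hu : uniq cs by case: Hcyc => _ [].
  have Hk : (2 * (size cs)./2 = size cs)%N by rewrite mul2n (even_halfK Heven).
  split.
  + exact: proper_unc Hp1.
  + have := ncol_unc (c1 := upd c j a) j Hu H3 Hall.
    have := ncol_upd Hcj Ha.
    rewrite /unc /upd /ncol => E1 E2; by rewrite -E1 -E2 Hk addnC.
  + move=> k l [<- _]; split; first by move/eqP: H4; lia.
    by exists cs; split.
- split.
  + exact: Hp1.
  + by rewrite (ncol_upd Hcj Ha).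
  + by [].
Qed.


Lemma full_fixed c F : (forall i, c i != 0%N) -> (run_from ends rule enumc K c F).1 = c.
Proof.
move=> Hfull; elim: F => [|f F IH] //=.
have -> : (step ends rule enumc K c f).1 = c.
  rewrite /step; case: pickP => [j /andP [/eqP Hj _]|_] //.
  by move: (Hfull j); rewrite Hj.
exact: IH.
Qed.

Lemma count_nseq1 n : count_mem 1%N (0%N :: nseq n 1%N) = n.
Proof. by rewrite /= count_nseq /= mul1n. Qed.

Lemma run_ok c F : propc ends c -> all (fun f => 1 <= f <= Fb)%N F ->
  (exists i, (run_from ends rule enumc K c F).1 i = 0%N) ->
  [/\ (count_mem 1%N (Rcirc (run_from ends rule enumc K c F).2) +
        ncol (run_from ends rule enumc K c F).1 = size F + ncol c)%N,
      forall n, (count_mem 1%N (take n (Rcirc (run_from ends rule enumc K c F).2)) <=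
                 count_mem 0%N (take n (Rcirc (run_from ends rule enumc K c F).2)) + ncol c)%N &
      forall k l, Some (k, l) \in (run_from ends rule enumc K c F).2 ->
         (3 <= k)%N /\ exists cs, is_cycle ends cs /\ size cs = (2 * k)%N].
Proof.
elim: F c => [|f F IH] c Hp HF Hunc.
  by split => //= n; rewrite take_nil.
move: HF => /= /andP [Hf HF].
case: (boolP [exists i, c i == 0%N]) => [/existsP [i0 /eqP Hi0]|Hnone]; last first.
  exfalso; case: Hunc => i; rewrite full_fixed.
    by move/eqP; apply/negP; move: Hnone; rewrite negb_exists => /forallP.
  by move=> i'; move: Hnone; rewrite negb_exists => /forallP.
have [Hp' Hnb Hrec] := step_ok Hp (ex_intro _ i0 Hi0) Hf.
move: Hunc => /= Hunc.
have [IH1 IH2 IH3] := IH _ Hp' HF Hunc.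
rewrite /= Rcirc_cons -cat_cons.
set r := (step ends rule enumc K c f).2 in Hnb Hrec *.
set c' := (step ends rule enumc K c f).1 in Hnb Hp' Hunc IH1 IH2 IH3 *.
set w := Rcirc _ in IH1 IH2 *.
split.
- rewrite count_cat count_nseq1 -addnA IH1; lia.
- move=> n; rewrite take_cat /= size_nseq; case: ifP => Hn.
    case: n Hn => [|n] Hn //=.
    rewrite take_nseq; last by lia.
    rewrite count_nseq /= mul1n; lia.
  rewrite -cat_cons !count_cat count_nseq1.
  have -> : (count_mem 0%N (0%N :: nseq (nb r) 1%N) = 1)%N by rewrite /= count_nseq.
  move: (IH2 (n - (nb r).+1)); set x := count_mem 1%N (take _ w); set y := count_mem 0%N (take _ w); lia.
- move=> k l; rewrite inE => /orP [/eqP E|Hin]; [exact: (Hrec k l (esym E)) | exact: (IH3 k l Hin)].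
Qed.

End M.

Unset Implicit Arguments.

Lemma all01 R : all (fun x => (x == 0%N) || (x == 1%N)) (Rcirc R).
Proof.
elim: R => [|r R IH] //; rewrite Rcirc_cons -cat_cons all_cat IH andbT /= all_nseq /=.
by rewrite orbT.
Qed.

Lemma count0_Rcirc R : count_mem 0%N (Rcirc R) = size R.
Proof.
elim: R => [|r R IH] //; rewrite Rcirc_cons -cat_cons count_cat IH /= count_nseq /=.
by rewrite mul0n.
Qed.

Lemma size_run (T : finType) (m : nat) (ends : 'I_m -> T * T) rule enumc K c F :
  size (run_from ends rule enumc K c F).2 = size F.
Proof. by elim: F c => [|f F IH] c //=; rewrite IH. Qed.

Lemma desc_info R a b : descent (Rcirc R) a b ->
  exists k l, Some (k, l) \in R /\ (b - a = 2 * k - 2)%N /\ (0 < b - a)%N.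
Proof.
move=> Hd; have Hab : (a < b)%N by case/and5P: Hd.
rewrite Rcirc_W in Hd; move/descent_W: Hd => /mapP [[[k l]|] Hin /= E].
  by exists k, l; split => //; split => //; lia.
lia.
Qed.

Theorem lemma4 (T : finType) (m : nat) (ends : 'I_m -> T * T)
  (Hsimple : simple_graph ends)
  (rule : ('I_m -> nat) -> 'I_m -> option (seq 'I_m)) (Hpick : rule_spec ends rule)
  (enumc : 'I_m -> nat -> seq (seq 'I_m)) (Henum : enum_spec ends enumc)
  (R : archiRealFieldType) (gamma : R) (Hgamma : (1 < gamma)%R)
  (t : nat) (Ht : (0 < t)%N) (F : seq nat) (HFsize : size F = t)
  (HFrange : all (fun f => (1 <= f <= Fbound gamma (maxdeg ends))%N) F)
  (Hunc : exists i, (procedure ends rule enumc (Kcol gamma (maxdeg ends)) F).1 i = 0%N) :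
  let res := procedure ends rule enumc (Kcol gamma (maxdeg ends)) F in
  let w := Rcirc res.2 in
  let r := #|[set i | res.1 i != 0%N]| in
  [/\ partial_dyck w,
      count_mem 0%N w = t,
      (count_mem 1%N w + r)%N = t,
      (forall a b, descent w a b -> ~~ odd (b - a))
    & (forall l : nat, (1 <= l)%N ->
        (forall cs, is_cycle ends cs -> (2 * l + 1 <= size cs)%N) ->
        forall a b, descent w a b -> (maxn 4 (2 * l) <= b - a)%N)].
Proof.
have Hp0 : propc ends (fun _ : 'I_m => 0%N) by move=> i i' v _ _ _; rewrite eqxx.
have Hn0 : ncol (fun _ : 'I_m => 0%N) = 0%N.
  rewrite /ncol; apply/eqP; rewrite cards_eq0; apply/eqP/setP => i; rewrite !inE.
  by rewrite eqxx.
have [H1 H2 H3] := run_ok Hsimple Hpick Hgamma Hp0 HFrange Hunc.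
rewrite /procedure in Hunc *; rewrite Hn0 addn0 in H1 H2.
split.
- split; first exact: all01.
  by move=> n; rewrite -[X in (_ <= X)%N]addn0; exact: H2.
- by rewrite count0_Rcirc size_run.
- by rewrite -HFsize; exact: H1.
- move=> a b /desc_info [k [l [Hin [E Hpos]]]].
  have [Hk _] := H3 k l Hin.
  by rewrite E (_ : (2 * k - 2 = 2 * k.-1)%N) ?oddM //; lia.
- move=> l Hl Hgirth a b /desc_info [k [l' [Hin [E Hpos]]]].
  have [Hk [cs [Hcs Hsz]]] := H3 k l' Hin.
  have := Hgirth cs Hcs; rewrite Hsz => Hg2.
  rewrite geq_max E; apply/andP; split; lia.
Qed.
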